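(* Assume CH. Let $\mathcal{I}$ be a $\sigma$-ideal on $\mathbb{R}$ satisfying the standing assumptions. Then there exists an $\mathcal{I}$-Luzin set $L\subseteq\mathbb{R}$ such that its $\mathbb{Q}$-linear span $\mathrm{span}_{\mathbb{Q}}(L)$ is also an $\mathcal{I}$-Luzin set.
   Context: Standing assumptions on $\mathcal{I}$: $\mathcal{I}$ is a $\sigma$-ideal of subsets of $\mathbb{R}$ such that $\mathbb{R}\notin\mathcal{I}$; $x+I\in\mathcal{I}$ and $xI\in\mathcal{I}$ for all $x\in\mathbb{R}$, $I\in\mathcal{I}$; every member of $\mathcal{I}$ is contained in a Borel member of $\mathcal{I}$; and for all Borel $A,B\notin\mathcal{I}$ the set $A-B$ has nonempty interior. A set $L\subseteq\mathbb{R}$ is $\mathcal{I}$-Luzin if $|L|=\mathfrak{c}$ and $L\cap I$ is countable for every $I\in\mathcal{I}$. *)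

(* Defs.v *)
From Stdlib Require Import Reals QArith Qreals.
Open Scope R_scope.

Definition subset (A B : R -> Prop) : Prop := forall x, A x -> B x.

Definition countable (A : R -> Prop) : Prop :=
  exists f : {x : R | A x} -> nat, forall u v, f u = f v -> u = v.

Definition has_size_continuum (A : R -> Prop) : Prop :=
  exists f : {x : R | A x} -> R,
    (forall u v, f u = f v -> u = v) /\ (forall y, exists u, f u = y).

Definition CH : Prop :=
  forall A : R -> Prop, countable A \/ has_size_continuum A.

Inductive Borel : (R -> Prop) -> Prop :=
| Borel_open : forall U, open_set U -> Borel U
| Borel_compl : forall A, Borel A -> Borel (fun x => ~ A x)
| Borel_cunion : forall F : nat -> R -> Prop,
    (forall n, Borel (F n)) -> Borel (fun x => exists n, F n x).

Definition translate (x : R) (A : R -> Prop) : R -> Prop :=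
  fun z => exists y, A y /\ z = x + y.
Definition scale (x : R) (A : R -> Prop) : R -> Prop :=
  fun z => exists y, A y /\ z = x * y.
Definition setdiff_alg (A B : R -> Prop) : R -> Prop :=
  fun z => exists a b, A a /\ B b /\ z = a - b.
Definition nonempty_interior (A : R -> Prop) : Prop :=
  exists x eps, 0 < eps /\ forall y, Rabs (y - x) < eps -> A y.

Definition sigma_ideal (I : (R -> Prop) -> Prop) : Prop :=
  I (fun _ => False) /\
  (forall A B, I B -> subset A B -> I A) /\
  (forall F : nat -> R -> Prop, (forall n, I (F n)) -> I (fun x => exists n, F n x)).

Definition standing_assumptions (I : (R -> Prop) -> Prop) : Prop :=
  sigma_ideal I /\
  ~ I (fun _ => True) /\
  (forall x A, I A -> I (translate x A) /\ I (scale x A)) /\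
  (forall A, I A -> exists B, Borel B /\ I B /\ subset A B) /\
  (forall A B, Borel A -> Borel B -> ~ I A -> ~ I B ->
     nonempty_interior (setdiff_alg A B)).

Definition I_Luzin (I : (R -> Prop) -> Prop) (L : R -> Prop) : Prop :=
  has_size_continuum L /\
  forall A, I A -> countable (fun x => L x /\ A x).

Inductive span_Q (L : R -> Prop) : R -> Prop :=
| span_Q_zero : span_Q L 0
| span_Q_base : forall x, L x -> span_Q L x
| span_Q_add : forall x y, span_Q L x -> span_Q L y -> span_Q L (x + y)
| span_Q_scal : forall (q : Q) x, span_Q L x -> span_Q L (Q2R q * x).

(* Main.v *)
Require Import Defs.
From Stdlib Require Import Reals QArith Qreals.
Open Scope R_scope.
From Stdlib Require Import PArith ZArith Lia Lra Cantor.
From Stdlib Require Import Wellfounded Classical ClassicalEpsilon FunctionalExtensionality PropExtensionality ProofIrrelevance.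
From mathcomp Require all_boot boolp wochoice Rstruct.
Open Scope R_scope.

Definition enum (A : R -> Prop) : Prop :=
  exists e : nat -> R, forall z, A z -> exists n, e n = z.

Lemma Q2R0 : Q2R 0 = 0. Proof. unfold Q2R; simpl; lra. Qed.
Lemma Q2R1 : Q2R 1 = 1. Proof. unfold Q2R; simpl; lra. Qed.

Lemma pair_ok : forall a b, Cantor.of_nat (Cantor.to_nat (a, b)) = (a, b).
Proof. intros; apply Cantor.cancel_of_to. Qed.

Lemma enum_sub : forall A B, subset A B -> enum B -> enum A.
Proof. intros A B H [e He]; exists e; intros z Az; apply He, H, Az. Qed.

Lemma enum_seq_union : forall C : nat -> R -> Prop,
  (forall k, enum (C k)) -> enum (fun z => exists k, C k z).
Proof.
  intros C H.
  pose (E := fun k => proj1_sig (constructive_indefinite_description _ (H k))).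
  assert (HE : forall k z, C k z -> exists m, E k m = z).
  { intros k; unfold E; destruct (constructive_indefinite_description _ (H k)); simpl; auto. }
  exists (fun n => let (k, m) := Cantor.of_nat n in E k m).
  intros z [k Hk]. destruct (HE k z Hk) as [m Hm].
  exists (Cantor.to_nat (k, m)). rewrite pair_ok. exact Hm.
Qed.

Lemma enum_plus : forall A B, enum A -> enum B ->
  enum (fun z => exists a b, A a /\ B b /\ z = a + b).
Proof.
  intros A B [e1 H1] [e2 H2].
  exists (fun n => let (i, j) := Cantor.of_nat n in e1 i + e2 j).
  intros z (a & b & Ha & Hb & ->).
  destruct (H1 a Ha) as [i <-]; destruct (H2 b Hb) as [j <-].
  exists (Cantor.to_nat (i, j)); rewrite pair_ok; reflexivity.
Qed.

Definition qe (n : nat) : Q :=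
  let (a, r) := Cantor.of_nat n in let (b, c) := Cantor.of_nat r in
  Qmake (Z.of_nat a - Z.of_nat b) (Pos.of_succ_nat c).

Lemma Z_nat_diff : forall z : Z, exists a b, (Z.of_nat a - Z.of_nat b)%Z = z.
Proof.
  intros z; destruct (Z_le_gt_dec 0 z).
  - exists (Z.to_nat z), 0%nat. rewrite Z2Nat.id; lia.
  - exists 0%nat, (Z.to_nat (- z)). rewrite Z2Nat.id; lia.
Qed.

Lemma qe_surj : forall q : Q, exists n, qe n = q.
Proof.
  intros [z p]. destruct (Z_nat_diff z) as (a & b & Hab).
  exists (Cantor.to_nat (a, Cantor.to_nat (b, Init.Nat.pred (Pos.to_nat p)))).
  unfold qe. rewrite !pair_ok. rewrite Hab. f_equal.
  apply SuccNat2Pos.inv. pose proof (Pos2Nat.is_pos p). lia.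
Qed.

Lemma enum_scal : forall A, enum A ->
  enum (fun z => exists (q : Q) a, A a /\ z = Q2R q * a).
Proof.
  intros A [e1 H1].
  exists (fun n => let (i, j) := Cantor.of_nat n in Q2R (qe i) * e1 j).
  intros z (q & a & Ha & ->).
  destruct (H1 a Ha) as [j <-]; destruct (qe_surj q) as [i <-].
  exists (Cantor.to_nat (i, j)); rewrite pair_ok; reflexivity.
Qed.

Lemma enum_union3 : forall A B C, enum A -> enum B -> enum C ->
  enum (fun z => A z \/ B z \/ C z).
Proof.
  intros A B C HA HB HC.
  apply enum_sub with (B := fun z => exists k, (match k with 0%nat => A | 1%nat => B | _ => C end) z).
  - intros z [H|[H|H]]; [exists 0%nat|exists 1%nat|exists 2%nat]; exact H.
  - apply enum_seq_union. intros [|[|k]]; auto.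
Qed.

Fixpoint clos (L : R -> Prop) (k : nat) : R -> Prop :=
  match k with
  | O => fun z => z = 0 \/ L z
  | S k => fun z => clos L k z \/
      (exists a b, clos L k a /\ clos L k b /\ z = a + b) \/
      (exists (q : Q) a, clos L k a /\ z = Q2R q * a)
  end.

Lemma clos_mono : forall L k k', (k <= k')%nat -> subset (clos L k) (clos L k').
Proof.
  intros L k k' H; induction H; intros z Hz; auto. simpl. left; auto.
Qed.

Lemma span_in_clos : forall L z, span_Q L z -> exists k, clos L k z.
Proof.
  intros L z H; induction H.
  - exists 0%nat; left; reflexivity.
  - exists 0%nat; right; auto.
  - destruct IHspan_Q1 as [k1 H1], IHspan_Q2 as [k2 H2].
    exists (S (Nat.max k1 k2)). right; left. exists x, y. split; [|split; [|reflexivity]].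
    + apply (clos_mono L k1); [lia|auto].
    + apply (clos_mono L k2); [lia|auto].
  - destruct IHspan_Q as [k Hk]. exists (S k). right; right. exists q, x; auto.
Qed.

Lemma enum_clos : forall L k, enum L -> enum (clos L k).
Proof.
  intros L k HL; induction k; simpl.
  - apply enum_sub with (B := fun z => z = 0 \/ L z \/ L z); [intros z [H|H]; auto|].
    apply enum_union3; auto. exists (fun _ => 0); intros z ->; exists 0%nat; auto.
  - apply enum_union3; auto. apply enum_plus; auto. apply enum_scal; auto.
Qed.

Lemma enum_span : forall L, enum L -> enum (span_Q L).
Proof.
  intros L HL.
  apply enum_sub with (B := fun z => exists k, clos L k z).
  - intros z Hz; apply span_in_clos; auto.
  - apply enum_seq_union; intros; apply enum_clos; auto.
Qed.

Lemma span_mono : forall A B, subset A B -> subset (span_Q A) (span_Q B).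
Proof.
  intros A B H z Hz; induction Hz.
  - apply span_Q_zero.
  - apply span_Q_base; auto.
  - apply span_Q_add; auto.
  - apply span_Q_scal; auto.
Qed.

Lemma countable_enum : forall A, countable A -> enum A.
Proof.
  intros A [f Hf].
  exists (fun n => match excluded_middle_informative (exists u, f u = n) with
                   | left H => proj1_sig (proj1_sig (constructive_indefinite_description _ H))
                   | right _ => 0 end).
  intros z Az. exists (f (exist _ z Az)).
  destruct excluded_middle_informative as [H|H].
  - destruct (constructive_indefinite_description _ H) as [u Hu]; simpl.
    apply Hf in Hu; subst u; reflexivity.
  - exfalso; apply H; eauto.
Qed.

Lemma enum_countable : forall A, enum A -> countable A.
Proof.
  intros A [e He].
  exists (fun u => proj1_sig (constructive_indefinite_description _ (He _ (proj2_sig u)))).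
  intros [u Hu] [v Hv]; simpl.
  destruct (constructive_indefinite_description _ (He u Hu)) as [n1 H1].
  destruct (constructive_indefinite_description _ (He v Hv)) as [n2 H2]; simpl.
  intros Heq. assert (E : u = v) by congruence. revert Hu H1; rewrite E; intros Hu _. f_equal; apply proof_irrelevance.
Qed.

Section Construction.
Variable I : (R -> Prop) -> Prop.
Hypothesis Hsub : forall A B, I B -> subset A B -> I A.
Hypothesis Hun : forall F : nat -> R -> Prop, (forall n, I (F n)) -> I (fun x => exists n, F n x).
Hypothesis Hfull : ~ I (fun _ => True).
Hypothesis Htr : forall x A, I A -> I (translate x A).
Hypothesis Hsc : forall x A, I A -> I (scale x A).
Hypothesis Hsing : forall y, I (fun z => z = y).
Variable T : Type.
Variable lt : T -> T -> Prop.
Hypothesis lt_wf : well_founded lt.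
Hypothesis lt_trans : forall a b c, lt a b -> lt b c -> lt a c.
Hypothesis lt_total : forall a b, lt a b \/ a = b \/ lt b a.
Hypothesis seg_enum : forall a, exists e : nat -> T, forall b, lt b a -> exists n, e n = b.
Hypothesis T_unc : ~ exists e : nat -> T, forall t, exists n, e n = t.
Variable t0 : T.
Variable Bs : T -> R -> Prop.
Hypothesis Bs_I : forall t, I (Bs t).
Hypothesis Bs_cov : forall A, I A -> exists t, subset A (Bs t).

Lemma I_cover : forall A (F : nat -> R -> Prop), (forall n, I (F n)) ->
  subset A (fun x => exists n, F n x) -> I A.
Proof. intros A F H1 H2; eapply Hsub; [apply Hun; exact H1|exact H2]. Qed.

Lemma I_enum : forall A, enum A -> I A.
Proof.
  intros A [e He]. apply I_cover with (F := fun n z => z = e n).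
  - intros; apply Hsing.
  - intros z Hz; destruct (He z Hz) as [n <-]; exists n; reflexivity.
Qed.

Lemma lt_irrefl : forall a, ~ lt a a.
Proof.
  intros a; induction (lt_wf a) as [a _ IH]; intros H; exact (IH a H H).
Qed.

Definition Bad (P : R -> Prop) (a : T) : R -> Prop := fun y =>
  span_Q P y \/ exists (q : Q) v c, Q2R q <> 0 /\ span_Q P v /\ (lt c a \/ c = a) /\
    Bs c (Q2R q * y + v).

Lemma Bad_I : forall P a, enum P -> I (Bad P a).
Proof.
  intros P a HP.
  destruct (enum_span P HP) as [ev Hev].
  destruct (seg_enum a) as [es Hes].
  pose (ec := fun k => match k with O => a | S k => es k end).
  pose (F := fun n => let (i, r) := Cantor.of_nat n in let (j, k) := Cantor.of_nat r in
              fun y => Q2R (qe i) <> 0 /\ Bs (ec k) (Q2R (qe i) * y + ev j)).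
  apply I_cover with (F := fun n => match n with O => span_Q P | S n => F n end).
  - intros [|n].
    + apply I_enum, enum_span, HP.
    + unfold F. destruct (Cantor.of_nat n) as [i r]. destruct (Cantor.of_nat r) as [j k].
      destruct (Req_dec (Q2R (qe i)) 0) as [E|E].
      * apply Hsub with (B := fun z => z = 0); [apply Hsing|]. intros y [H _]; contradiction.
      * apply Hsub with (B := scale (/ Q2R (qe i)) (translate (- ev j) (Bs (ec k)))).
        { apply Hsc, Htr, Bs_I. }
        intros y [_ H]. exists (Q2R (qe i) * y). split.
        -- exists (Q2R (qe i) * y + ev j). split; [exact H|ring].
        -- field; exact E.
  - intros y [H|(q & v & c & Hq & Hv & Hc & HB)].
    + exists O; exact H.
    + destruct (Hev v Hv) as [j Hj]. destruct (qe_surj q) as [i Hi].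
      assert (Hk : exists k, ec k = c).
      { destruct Hc as [Hc| ->]; [destruct (Hes c Hc) as [k Hk]; exists (S k); exact Hk|exists O; reflexivity]. }
      destruct Hk as [k Hk].
      exists (S (Cantor.to_nat (i, Cantor.to_nat (j, k)))). unfold F. rewrite !pair_ok.
      rewrite Hi, Hj, Hk. auto.
Qed.

Definition pick (X : R -> Prop) : R := epsilon (inhabits 0) (fun y => ~ X y).

Lemma pick_spec : forall X, I X -> ~ X (pick X).
Proof.
  intros X HX. unfold pick. apply epsilon_spec.
  apply NNPP; intros H. apply Hfull. apply Hsub with (B := X); auto.
  intros y _. apply NNPP; intros Hy; apply H; exists y; exact Hy.
Qed.

Definition F_rec (a : T) (rec : forall b, lt b a -> R) : R :=
  pick (Bad (fun z => exists b (h : lt b a), rec b h = z) a).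

Definition x : T -> R := Fix lt_wf (fun _ => R) F_rec.

Definition Prev a := fun z => exists b, lt b a /\ x b = z.
Definition Upto m := fun z => exists b, (lt b m \/ b = m) /\ x b = z.

Lemma x_eq : forall a, x a = pick (Bad (Prev a) a).
Proof.
  intros a. unfold x at 1. rewrite Fix_eq.
  - unfold F_rec. f_equal. f_equal. apply functional_extensionality; intros z.
    apply propositional_extensionality; unfold Prev; split.
    + intros (b & h & E); exists b; split; auto.
    + intros (b & h & E); exists b, h; auto.
  - intros a' f g H. unfold F_rec. f_equal. f_equal. apply functional_extensionality; intros z.
    apply propositional_extensionality; split.
    + intros (b & h & E); exists b, h; rewrite <- H; auto.
    + intros (b & h & E); exists b, h; rewrite H; auto.
Qed.

Lemma Prev_enum : forall a, enum (Prev a).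
Proof.
  intros a. destruct (seg_enum a) as [e He]. exists (fun n => x (e n)).
  intros z (b & Hb & <-). destruct (He b Hb) as [n <-]. exists n; reflexivity.
Qed.

Lemma x_good : forall a, ~ Bad (Prev a) a (x a).
Proof.
  intros a H. apply (pick_spec (Bad (Prev a) a)); [apply Bad_I, Prev_enum|].
  rewrite <- x_eq; exact H.
Qed.

Lemma x_inj : forall a b, x a = x b -> a = b.
Proof.
  assert (K : forall a b, lt b a -> x a <> x b).
  { intros a b H E. apply (x_good a). left. apply span_Q_base. exists b; auto. }
  intros a b E. destruct (lt_total a b) as [H|[H|H]]; auto.
  - exfalso; apply (K b a H); auto.
  - exfalso; apply (K a b H); auto.
Qed.

Lemma Upto_mono : forall m1 m2, lt m1 m2 -> subset (Upto m1) (Upto m2).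
Proof.
  intros m1 m2 H z (b & Hb & E); exists b; split; auto; destruct Hb as [Hb| ->]; left; eauto.
Qed.

Lemma span_split : forall (D : T -> Prop) z,
  span_Q (fun z => exists b, D b /\ x b = z) z ->
  z = 0 \/ exists m, D m /\ span_Q (Upto m) z.
Proof.
  intros D z H; induction H.
  - left; reflexivity.
  - destruct H as (b & Hb & <-). right. exists b; split; auto.
    apply span_Q_base. exists b; auto.
  - destruct IHspan_Q1 as [-> | (m1 & D1 & S1)]; destruct IHspan_Q2 as [-> | (m2 & D2 & S2)].
    + left; ring.
    + right; exists m2; rewrite Rplus_0_l; auto.
    + right; exists m1; rewrite Rplus_0_r; auto.
    + right. destruct (lt_total m1 m2) as [L|[<-|L]].
      * exists m2; split; auto. apply span_Q_add; auto. apply (span_mono (Upto m1)); auto.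
        apply Upto_mono; auto.
      * exists m1; split; auto. apply span_Q_add; auto.
      * exists m1; split; auto. apply span_Q_add; auto. apply (span_mono (Upto m2)); auto.
        apply Upto_mono; auto.
  - destruct IHspan_Q as [-> | (m & Dm & Sm)].
    + left; ring.
    + right; exists m; split; auto. apply span_Q_scal; auto.
Qed.

Lemma Upto_form : forall m z, span_Q (Upto m) z ->
  exists (q : Q) v, span_Q (Prev m) v /\ z = Q2R q * x m + v.
Proof.
  intros m z H; induction H.
  - exists 0%Q, 0. split; [apply span_Q_zero|]. rewrite Q2R0; ring.
  - destruct H as (b & [Hb| ->] & <-).
    + exists 0%Q, (x b). split; [apply span_Q_base; exists b; auto|]. rewrite Q2R0; ring.
    + exists 1%Q, 0. split; [apply span_Q_zero|]. rewrite Q2R1; ring.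
  - destruct IHspan_Q1 as (q1 & v1 & H1 & ->), IHspan_Q2 as (q2 & v2 & H2 & ->).
    exists (q1 + q2)%Q, (v1 + v2). split; [apply span_Q_add; auto|]. rewrite Q2R_plus; ring.
  - destruct IHspan_Q as (q1 & v1 & H1 & ->).
    exists (q * q1)%Q, (Q2R q * v1). split; [apply span_Q_scal; auto|]. rewrite Q2R_mult; ring.
Qed.

Lemma key : forall m z r, span_Q (Upto m) z -> Bs r z -> span_Q (Upto r) z.
Proof.
  intros m; induction (lt_wf m) as [m _ IH]; intros z r Hz Hr.
  destruct (lt_total m r) as [L|[<-|L]].
  - apply (span_mono (Upto m)); auto. apply Upto_mono; auto.
  - exact Hz.
  - destruct (Upto_form m z Hz) as (q & v & Hv & ->).
    destruct (Req_dec (Q2R q) 0) as [E|E].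
    + rewrite E, Rmult_0_l, Rplus_0_l in *.
      destruct (span_split (fun b => lt b m) v Hv) as [-> | (m' & Hm' & Sm')].
      * apply span_Q_zero.
      * apply (IH m' Hm'); auto.
    + exfalso. apply (x_good m). right. exists q, v, r. auto.
Qed.

Theorem construction : exists L : R -> Prop,
  ~ enum L /\ (forall A, I A -> enum (fun z => span_Q L z /\ A z)).
Proof.
  exists (fun z => exists b, True /\ x b = z). split.
  - intros [e He]. apply T_unc.
    exists (fun n => epsilon (inhabits t0) (fun b => x b = e n)).
    intros t. destruct (He (x t)) as [n Hn]; [exists t; auto|]. exists n.
    apply x_inj. rewrite <- Hn. apply (epsilon_spec (inhabits t0) (fun b => x b = e n)).
    exists t; auto.
  - intros A HA. destruct (Bs_cov A HA) as [r Hr].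
    apply enum_sub with (B := span_Q (Upto r)).
    + intros z [Hz Az]. destruct (span_split (fun _ => True) z Hz) as [-> | (m & _ & Sm)].
      * apply span_Q_zero.
      * apply (key m); auto.
    + apply enum_span. destruct (seg_enum r) as [e He].
      exists (fun n => match n with O => x r | S n => x (e n) end).
      intros z (b & [Hb| ->] & <-).
      * destruct (He b Hb) as [n <-]; exists (S n); reflexivity.
      * exists O; reflexivity.
Qed.
End Construction.

Fixpoint S3 (b : nat -> bool) (n : nat) : R :=
  match n with O => 0 | S n => S3 b n + (if b n then (/3)^n else 0) end.

Lemma pow3_pos : forall n, 0 < (/3)^n.
Proof. intros; apply pow_lt; lra. Qed.

Lemma S3_step : forall b n, S3 b n <= S3 b (S n) <= S3 b n + (/3)^n.
Proof.
  intros b n; simpl. pose proof (pow3_pos n). destruct (b n); lra.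
Qed.

Lemma S3_bound : forall b m t, S3 b (m + t) <= S3 b m + 3/2 * (/3)^m * (1 - (/3)^t).
Proof.
  intros b m t; induction t.
  - rewrite Nat.add_0_r; simpl; lra.
  - rewrite Nat.add_succ_r. pose proof (S3_step b (m + t)).
    rewrite pow_add in H. simpl pow.
    pose proof (pow3_pos m); pose proof (pow3_pos t). nra.
Qed.

Lemma S3_mono : forall b n t, S3 b n <= S3 b (n + t).
Proof.
  intros b n t; induction t.
  - rewrite Nat.add_0_r; lra.
  - rewrite Nat.add_succ_r; pose proof (S3_step b (n + t)); lra.
Qed.

Lemma S3_agree : forall b c k, (forall i, (i < k)%nat -> b i = c i) -> S3 b k = S3 c k.
Proof.
  intros b c k; induction k; intros H; simpl; auto.
  rewrite IHk by (intros; apply H; lia). rewrite (H k) by lia. reflexivity.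
Qed.

Lemma S3_ub : forall b n, S3 b n <= 3/2.
Proof.
  intros b n. pose proof (S3_bound b 0 n). simpl in H. pose proof (pow3_pos n). lra.
Qed.

Definition J1 (b : nat -> bool) : R.
Proof.
  refine (proj1_sig (completeness (fun y => exists n, y = S3 b n) _ _)).
  - exists (3/2); intros y [n ->]; apply S3_ub.
  - exists 0, O; reflexivity.
Defined.

Lemma J1_spec : forall b, is_lub (fun y => exists n, y = S3 b n) (J1 b).
Proof. intros b; unfold J1; destruct completeness; simpl; auto. Qed.

Lemma J1_sep : forall b c k, b k = true -> c k = false ->
  (forall i, (i < k)%nat -> b i = c i) -> J1 c < J1 b.
Proof.
  intros b c k Hb Hc Hi.
  destruct (J1_spec b) as [Ub _]. destruct (J1_spec c) as [_ Lc].
  assert (E : S3 b k = S3 c k) by (apply S3_agree; auto).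
  assert (H1 : S3 b (S k) <= J1 b) by (apply Ub; exists (S k); reflexivity).
  simpl in H1. rewrite Hb in H1.
  assert (H2 : J1 c <= S3 c k + (/3)^k / 2).
  { apply Lc. intros y [n ->]. pose proof (pow3_pos k).
    destruct (le_lt_dec n k) as [L|L].
    - pose proof (S3_mono c n (k - n)) as H0. replace (n + (k - n))%nat with k in H0 by lia. lra.
    - replace n with (S k + (n - S k))%nat by lia.
      pose proof (S3_bound c (S k) (n - S k)) as H0.
      assert (E1 : S3 c (S k) = S3 c k) by (simpl; rewrite Hc; ring).
      assert (E2 : (/3)^(S k) = /3 * (/3)^k) by reflexivity.
      rewrite E1, E2 in H0.
      pose proof (pow3_pos (n - S k)). nra. }
  pose proof (pow3_pos k). lra.
Qed.

Lemma least_nat : forall P : nat -> Prop, (exists n, P n) ->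
  exists n, P n /\ forall m, (m < n)%nat -> ~ P m.
Proof.
  intros P [n Hn]. revert Hn. induction n as [n IH] using (well_founded_induction Wf_nat.lt_wf).
  intros Hn. destruct (classic (exists m, (m < n)%nat /\ P m)) as [[m [Hm Pm]]|H].
  - exact (IH m Hm Pm).
  - exists n; split; auto. intros m Hm Pm; apply H; eauto.
Qed.

Lemma J1_inj : forall b c, J1 b = J1 c -> b = c.
Proof.
  intros b c E. apply functional_extensionality; intros n. apply NNPP; intros Hn.
  destruct (least_nat (fun k => b k <> c k)) as (k & Hk & Hmin); [eauto|].
  assert (Hi : forall i, (i < k)%nat -> b i = c i).
  { intros i Hi; apply NNPP; intros H; exact (Hmin i Hi H). }
  destruct (b k) eqn:Eb; destruct (c k) eqn:Ec; try congruence.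
  - pose proof (J1_sep b c k Eb Ec Hi); lra.
  - assert (Hi' : forall i, (i < k)%nat -> c i = b i) by (intros; symmetry; auto).
    pose proof (J1_sep c b k Ec Eb Hi'); lra.
Qed.

Definition J2 (f : nat -> nat) : nat -> bool :=
  fun n => let (a, b) := Cantor.of_nat n in Nat.eqb (f a) b.

Lemma J2_inj : forall f g, J2 f = J2 g -> f = g.
Proof.
  intros f g E. apply functional_extensionality; intros a.
  assert (H := f_equal (fun h => h (Cantor.to_nat (a, f a))) E). cbv beta in H.
  unfold J2 in H. rewrite pair_ok in H. rewrite Nat.eqb_refl in H.
  symmetry in H. apply Nat.eqb_eq in H. auto.
Qed.

Definition decR (r : R) : nat -> nat :=
  epsilon (inhabits (fun _ => O)) (fun f => J1 (J2 f) = r).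

Lemma decR_surj : forall f, exists r, decR r = f.
Proof.
  intros f. exists (J1 (J2 f)). unfold decR.
  apply J2_inj, J1_inj. apply (epsilon_spec (inhabits (fun _ => O)) (fun g => J1 (J2 g) = J1 (J2 f))).
  exists f; reflexivity.
Qed.

Definition ctr (k : nat) : R :=
  let (p, j) := Cantor.of_nat k in let (a, b) := Cantor.of_nat p in
  IZR (Z.of_nat a - Z.of_nat b) / INR (S j).
Definition rad (k : nat) : R :=
  let (p, j) := Cantor.of_nat k in / INR (S j).
Definition ball (k : nat) (x : R) : Prop := Rabs (x - ctr k) < rad k.

Inductive Dec : (nat -> nat) -> (R -> Prop) -> Prop :=
| Dec_open : forall f, f O = O -> Dec f (fun x => exists k, f (S k) <> O /\ ball k x)
| Dec_compl : forall f A, f O = 1%nat -> Dec (fun n => f (S n)) A -> Dec f (fun x => ~ A x)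
| Dec_union : forall f (F : nat -> R -> Prop), f O = 2%nat ->
    (forall n, Dec (fun m => f (S (Cantor.to_nat (n, m)))) (F n)) ->
    Dec f (fun x => exists n, F n x).

Lemma Dec_fun : forall f A, Dec f A -> forall B, Dec f B -> A = B.
Proof.
  intros f A H; induction H; intros B HB; inversion HB; subst; try congruence.
  - rewrite (IHDec A0); auto.
  - assert (E : F = F0).
    { apply functional_extensionality; intros n. apply H1. auto. }
    subst; reflexivity.
Qed.

Lemma open_balls : forall U x, open_set U -> U x ->
  exists k, ball k x /\ forall y, ball k y -> U y.
Proof.
  intros U x HU Ux. destruct (HU x Ux) as [[delta Hd] Hinc]. simpl in Hinc.
  destruct (archimed_cor1 (delta / 2)) as (N & HN & HN0); [lra|].
  assert (HNr : 0 < INR N) by (apply lt_0_INR; auto).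
  remember (x * INR N) as r eqn:Er.
  remember (up r - 1)%Z as m eqn:Em.
  destruct (archimed r) as [A1 A2].
  assert (Hm : IZR m <= r /\ r - 1 < IZR m) by (rewrite Em, minus_IZR; simpl; lra).
  destruct (Z_nat_diff m) as (a & b & Hab).
  exists (Cantor.to_nat (Cantor.to_nat (a, b), Init.Nat.pred N)).
  assert (EN : INR (S (Init.Nat.pred N)) = INR N) by (f_equal; lia).
  assert (Hc : ctr (Cantor.to_nat (Cantor.to_nat (a, b), Init.Nat.pred N)) = IZR m / INR N).
  { unfold ctr. rewrite !pair_ok. rewrite Hab, EN. reflexivity. }
  assert (Hr : rad (Cantor.to_nat (Cantor.to_nat (a, b), Init.Nat.pred N)) = / INR N).
  { unfold rad. rewrite !pair_ok. rewrite EN. reflexivity. }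
  assert (Hx : Rabs (x - IZR m / INR N) < / INR N).
  { assert (E : x - IZR m / INR N = (r - IZR m) * / INR N) by (rewrite Er; field; lra).
    rewrite E. pose proof (Rinv_0_lt_compat _ HNr) as Hi.
    assert (D : 0 <= r - IZR m < 1) by (destruct Hm; split; lra).
    rewrite Rabs_right.
    - rewrite <- (Rmult_1_l (/ INR N)) at 2. apply Rmult_lt_compat_r; lra.
    - apply Rle_ge, Rmult_le_pos; lra. }
  unfold ball; rewrite Hc, Hr. split; auto.
  intros y Hy. apply Hinc. unfold disc.
  replace (y - x) with ((y - IZR m / INR N) + (IZR m / INR N - x)) by ring.
  eapply Rle_lt_trans; [apply Rabs_triang|].
  rewrite Rabs_minus_sym in Hx. simpl. lra.
Qed.

Definition fo (U : R -> Prop) (n : nat) : nat :=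
  match n with
  | O => O
  | S k => if excluded_middle_informative (forall y, ball k y -> U y) then 1%nat else O
  end.

Lemma Borel_Dec : forall B, Borel B -> exists f, Dec f B.
Proof.
  intros B H; induction H.
  - exists (fo U).
    assert (E : U = fun x => exists k, fo U (S k) <> O /\ ball k x).
    { apply functional_extensionality; intros x; apply propositional_extensionality; split.
      - intros Ux. destruct (open_balls U x H Ux) as (k & Hk & Hs). exists k; split; auto.
        simpl. destruct excluded_middle_informative; [discriminate|contradiction].
      - intros (k & Hk & Hb). simpl in Hk. destruct excluded_middle_informative; [auto|congruence]. }
    pattern U at 2; rewrite E. apply Dec_open. reflexivity.
  - destruct IHBorel as [f Hf].
    exists (fun n => match n with O => 1%nat | S n => f n end).
    apply Dec_compl; auto.
  - pose (G := fun n => proj1_sig (constructive_indefinite_description _ (H0 n))).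
    assert (HG : forall n, Dec (G n) (F n)).
    { intros n; unfold G; destruct constructive_indefinite_description; auto. }
    exists (fun n => match n with O => 2%nat | S n => let (i, j) := Cantor.of_nat n in G i j end).
    apply Dec_union; auto. intros n. rewrite (functional_extensionality (fun m => _) (G n)); auto.
    intros m. cbv beta iota. rewrite pair_ok. reflexivity.
Qed.
Module WO.
Import all_boot boolp wochoice Rstruct.
Lemma wo_R : exists W : R -> R -> Prop,
  (forall A : R -> Prop, (exists x, A x) -> exists z, A z /\ forall y, A y -> W z y) /\
  (forall a b, W a b -> W b a -> a = b).
Proof.
have [W HW] := well_ordering_principle R.
exists (fun a b => W a b); split.
- move=> A [x Ax].
  have ne : nonempty (fun y => `[< A y >]) by exists x; apply/asboolP.
  have [z [[zA zl] _]] := HW _ ne.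
  exists z; split; first by move: zA => /asboolP.
  by move=> y Ay; apply: zl; apply/asboolP.
- have refl : forall c, W c c.
    move=> c; have ne : nonempty (pred1 c) by exists c; rewrite unfold_in /= eqxx.
    have [z [[zc zl] _]] := HW _ ne.
    move: zc; rewrite unfold_in /= => /eqP zc; subst z.
    by apply: zl; rewrite unfold_in /= eqxx.
  move=> a b ab ba.
  pose P := (fun y => (y == a) || (y == b)).
  have ne : nonempty P by exists a; rewrite unfold_in /P /= eqxx.
  have [z [_ U]] := HW _ ne.
  have Ha : minimum_of W P a.
    split; first by rewrite unfold_in /P /= eqxx.
    by move=> y; rewrite unfold_in /P /= => /orP[/eqP->|/eqP->]; [apply: refl|].
  have Hb : minimum_of W P b.
    split; first by rewrite unfold_in /P /= eqxx orbT.
    by move=> y; rewrite unfold_in /P /= => /orP[/eqP->|/eqP->]; [|apply: refl].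
  by rewrite -(U _ Ha) -(U _ Hb).
Qed.
End WO.

Lemma singleton_I : forall I, standing_assumptions I -> forall y, I (fun z => z = y).
Proof.
  intros I (Hsig & Hfull & Hinv & Hbor & Hint) y.
  destruct Hsig as (H0 & Hsub & Hun).
  assert (B0 : Borel (fun z => z = 0)).
  { assert (E : (fun z : R => z = 0) = (fun z => ~ (fun w => w <> 0) z)).
    { apply functional_extensionality; intros z; apply propositional_extensionality; split.
      - intros Hz Hn; contradiction.
      - intros Hz; apply NNPP; auto. }
    rewrite E. apply Borel_compl, Borel_open.
    intros z Hz. assert (P : 0 < Rabs z) by (apply Rabs_pos_lt; auto).
    exists (mkposreal _ P). intros w Hw; unfold disc in Hw; simpl in Hw. intros ->.
    rewrite Rminus_0_l, Rabs_Ropp in Hw. lra. }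
  assert (I0 : I (fun z => z = 0)).
  { apply NNPP; intros N. destruct (Hint _ _ B0 B0 N N) as (c & eps & He & Hb).
    destruct (Hb c) as (a & b & -> & -> & E1); [rewrite Rminus_eq_0, Rabs_R0; auto|].
    destruct (Hb (c + eps / 2)) as (a & b & -> & -> & E2).
    - replace (c + eps / 2 - c) with (eps / 2) by ring. rewrite Rabs_right; lra.
    - lra. }
  apply Hsub with (B := translate y (fun z => z = 0)).
  - apply Hinv; auto.
  - intros z ->. exists 0; split; auto; ring.
Qed.

Definition BsR (I : (R -> Prop) -> Prop) (r : R) : R -> Prop :=
  fun z => exists A, Dec (decR r) A /\ I A /\ A z.

Lemma from_order : forall I, CH -> standing_assumptions I ->
  forall (T : Type) (lt : T -> T -> Prop) (t0 : T) (s : T -> R),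
  well_founded lt ->
  (forall a b c, lt a b -> lt b c -> lt a c) ->
  (forall a b, lt a b \/ a = b \/ lt b a) ->
  (forall a, exists e : nat -> T, forall b, lt b a -> exists n, e n = b) ->
  (~ exists e : nat -> T, forall t, exists n, e n = t) ->
  (forall r, exists t, s t = r) ->
  exists L : R -> Prop, I_Luzin I L /\ I_Luzin I (span_Q L).
Proof.
  intros I HCH HI T lt t0 s Hwf Htr Htot Hseg Hunc Hs.
  pose proof (singleton_I I HI) as Hsing.
  destruct HI as ((H0 & Hsub & Hun) & Hfull & Hinv & Hbor & Hint).
  destruct (construction I Hsub Hun Hfull (fun x A H => proj1 (Hinv x A H))
     (fun x A H => proj2 (Hinv x A H)) Hsing T lt Hwf Htr Htot Hseg Hunc t0
     (fun t => BsR I (s t))) as (L & HL1 & HL2).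
  - intros t. destruct (classic (exists A, Dec (decR (s t)) A /\ I A)) as [(A & HA & IA)|N].
    + apply Hsub with (B := A); auto. intros z (B & HB & IB & Bz).
      rewrite (Dec_fun _ _ HA B HB); auto.
    + apply Hsub with (B := fun z => z = 0); auto. intros z (B & HB & IB & Bz). exfalso; eauto.
  - intros A IA. destruct (Hbor A IA) as (B & BB & IB & AB).
    destruct (Borel_Dec B BB) as [f Hf]. destruct (decR_surj f) as [r Hr].
    destruct (Hs r) as [t Ht]. exists t. intros z Az. exists B. rewrite Ht, Hr. auto.
  - exists L.
    assert (Lsub : subset L (span_Q L)) by (intros z Hz; apply span_Q_base; auto).
    split; split.
    + destruct (HCH L) as [C|C]; auto. exfalso; apply HL1, countable_enum, C.
    + intros A IA. apply enum_countable. apply enum_sub with (B := fun z => span_Q L z /\ A z); auto.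
      intros z [Lz Az]; auto.
    + destruct (HCH (span_Q L)) as [C|C]; auto. exfalso; apply HL1.
      apply enum_sub with (B := span_Q L); auto. apply countable_enum, C.
    + intros A IA. apply enum_countable, HL2, IA.
Qed.
Lemma sig_eq : forall (P : R -> Prop) (u v : {x | P x}), proj1_sig u = proj1_sig v -> u = v.
Proof. intros P [a Ha] [b Hb]; simpl; intros E; subst b; f_equal; apply proof_irrelevance. Qed.

Theorem mainTheorem16 :
  CH ->
  forall I : (R -> Prop) -> Prop,
    standing_assumptions I ->
    exists L : R -> Prop, I_Luzin I L /\ I_Luzin I (span_Q L).
Proof.
  intros HCH I HI.
  destruct WO.wo_R as (W & Wmin & Wanti).
  assert (Wrefl : forall a, W a a).
  { intros a. destruct (Wmin (fun z => z = a)) as (z & -> & Hz); eauto. }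
  assert (Wtot : forall a b, W a b \/ W b a).
  { intros a b. destruct (Wmin (fun z => z = a \/ z = b)) as (z & [-> | ->] & Hz); eauto. }
  assert (Wtrans : forall a b c, W a b -> W b c -> W a c).
  { intros a b c Hab Hbc.
    destruct (Wmin (fun z => z = a \/ z = b \/ z = c)) as (z & Hz & Hm); [eauto|].
    destruct Hz as [-> | [-> | ->]].
    - apply Hm; auto.
    - assert (a = b) by (apply Wanti; auto; apply Hm; auto). subst; auto.
    - assert (b = c) by (apply Wanti; auto; apply Hm; auto). subst; auto. }
  set (ltR := fun a b => W a b /\ a <> b).
  assert (ltR_wf : well_founded ltR).
  { intros a. apply NNPP; intros Na.
    destruct (Wmin (fun z => ~ Acc ltR z)) as (m & Hm & Hmin); [eauto|].
    apply Hm. constructor. intros y Hy. apply NNPP; intros Ny.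
    destruct Hy as [Hy1 Hy2]. apply Hy2. apply Wanti; auto. }
  assert (ltR_trans : forall a b c, ltR a b -> ltR b c -> ltR a c).
  { intros a b c [H1 H2] [H3 H4]. split; [eauto|]. intros ->. apply H2; apply Wanti; auto. }
  assert (ltR_tot : forall a b, ltR a b \/ a = b \/ ltR b a).
  { intros a b. destruct (Req_dec a b) as [E|E]; auto.
    destruct (Wtot a b); [left|right; right]; split; auto. }
  set (seg := fun a z => ltR z a).
  destruct (classic (forall a, enum (seg a))) as [Hall | Hnot].
  - apply (from_order I HCH HI R ltR 0 (fun r => r)); auto.
    + intros [e He].
      pose (f := fun n => S (decR (e n) n)).
      destruct (decR_surj f) as [r Hr]. destruct (He r) as [n Hn].
      assert (E : f n = S (f n)) by (unfold f at 1; rewrite Hn, Hr; reflexivity). lia.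
    + intros r; exists r; auto.
  - apply not_all_ex_not in Hnot. destruct Hnot as [a1 Ha1].
    destruct (Wmin (fun a => ~ enum (seg a))) as (a0 & Ha0 & Hmin); [eauto|].
    destruct (classic (exists z, seg a0 z)) as [[z0 Hz0]|N].
    2:{ exfalso; apply Ha0. exists (fun _ => 0). intros z Hz; exfalso; eauto. }
    destruct (HCH (seg a0)) as [C|[h [_ Hh]]].
    { exfalso; apply Ha0, countable_enum, C. }
    apply (from_order I HCH HI {x | seg a0 x} (fun u v => ltR (proj1_sig u) (proj1_sig v))
             (exist _ z0 Hz0) h).
    + apply (wf_inverse_image _ _ ltR (@proj1_sig _ _) ltR_wf).
    + intros a b c; apply ltR_trans.
    + intros a b. destruct (ltR_tot (proj1_sig a) (proj1_sig b)) as [L|[E|L]]; auto.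
      right; left; apply sig_eq; auto.
    + intros [z Hz].
      assert (Ez : enum (seg z)).
      { apply NNPP; intros Nz. apply Hmin in Nz. destruct Hz as [Hz1 Hz2]. apply Hz2.
        apply Wanti; auto. }
      destruct Ez as [e He].
      exists (fun n => match excluded_middle_informative (seg a0 (e n)) with
                       | left hh => exist _ (e n) hh | right _ => exist _ z0 Hz0 end).
      intros [b Hb] Hlt. simpl in Hlt. destruct (He b Hlt) as [n Hn]. exists n.
      destruct excluded_middle_informative as [hh|hh].
      * apply sig_eq; simpl; auto.
      * exfalso; apply hh; rewrite Hn; auto.
    + intros [e He]. apply Ha0. exists (fun n => proj1_sig (e n)).
      intros z Hz. destruct (He (exist _ z Hz)) as [n Hn]. exists n. rewrite Hn; reflexivity.
    + exact Hh.
Qed.
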